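(* Let $q$ be a prime power, $1\le k<n\le m$, let $g_1,\dots,g_n\in\mathbb{F}_{q^m}$ be linearly independent over $\mathbb{F}_q$, and let $\mathcal{G}$ be the Gabidulin code of dimension $k$ with respect to $g_1,\dots,g_n$. Then for every $f\in\mathcal{L}_q(x,\mathbb{F}_{q^m})$ with $\deg_q(f)=k$, the word $\sigma_f=(f(g_1),\dots,f(g_n))$ satisfies $d_H(\sigma_f,\mathcal{G})=n-k$, i.e. it is a deep hole of $\mathcal{G}$ in the Hamming metric (the Hamming covering radius of $\mathcal{G}$ being $n-k$). In particular $\mathcal{G}$ has at least $(q^m-1)q^{mk}$ deep holes in the Hamming metric.
   Context: A $q$-linearized polynomial over $\mathbb{F}_{q^m}$ is $L(x)=\sum_{i=0}^{d}a_ix^{q^i}$, $a_i\in\mathbb{F}_{q^m}$; if $a_d\ne0$, $d=\deg_q(L)$. $\mathcal{L}_q(x,\mathbb{F}_{q^m})$ is the set of these. $d_H$ is the Hamming distance, $d_H(\mathbf{u},C)=\min_{\mathbf{c}\in C}d_H(\mathbf{u},\mathbf{c})$; a deep hole in the Hamming metric is a word whose Hamming distance to the code equals the maximum over all words. The Gabidulin code of dimension $k$ with respect to $\mathbb{F}_q$-linearly independent $g_1,\dots,g_n$ is $\mathcal{G}=\{(v(g_1),\dots,v(g_n)) : v\in\mathcal{L}_q(x,\mathbb{F}_{q^m}),\ v=0\text{ or }\deg_q(v)<k\}$. *)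

(* Defs.v *)
From HB Require Import structures.
From mathcomp Require Import all_boot all_order all_algebra all_field.
Set Implicit Arguments. Unset Strict Implicit. Unset Printing Implicit Defensive.
Import GRing.Theory.
Local Open Scope ring_scope.

Definition is_prime_power (q : nat) : Prop :=
  exists p e : nat, prime p /\ (0 < e)%N /\ q = (p ^ e)%N.

Section Gab.
Variable L : finFieldType.

Definition in_Fq (q : nat) (x : L) : bool := x ^+ q == x.

Definition Fq_lin_indep (q n : nat) (g : 'I_n -> L) : Prop :=
  forall c : 'I_n -> L, (forall i, in_Fq q (c i)) ->
    \sum_(i < n) c i * g i = 0 -> forall i, c i = 0.

Definition qlin_eval (q d : nat) (a : {ffun 'I_d -> L}) (x : L) : L :=
  \sum_(i < d) a i * x ^+ (q ^ i).

Definition word n := {ffun 'I_n -> L}.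

(* Gabidulin code of dimension k: evaluations of q-polynomials v with
   v = 0 or deg_q v < k, i.e. v = sum_{i<k} a_i x^(q^i) *)
Definition gabidulin (q n k : nat) (g : 'I_n -> L) : {set word n} :=
  [set [ffun i => qlin_eval q a (g i)] | a : {ffun 'I_k -> L}].

Definition dH n (u c : word n) : nat := #|[set i | u i != c i]|.

(* Hamming distance to a code (min over codewords; n is a harmless
   default since dH <= n) *)
Definition dist_code n (u : word n) (C : {set word n}) : nat :=
  \big[minn/n]_(c in C) dH u c.

Definition covering_radius n (C : {set word n}) : nat :=
  \max_(u : word n) dist_code u C.

Definition deep_hole n (C : {set word n}) (u : word n) : bool :=
  dist_code u C == covering_radius C.

End Gab.

(* Main.v *)
Require Import Defs.
From HB Require Import structures.
From mathcomp Require Import all_boot all_order all_algebra all_field zify.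
Set Implicit Arguments. Unset Strict Implicit. Unset Printing Implicit Defensive.
Import GRing.Theory.
Local Open Scope ring_scope.

Lemma qnat (L : finFieldType) (p q : nat) i :
  p \in [pchar L] -> (exists e, q = (p ^ e)%N) -> ([pchar L]).-nat (q ^ i)%N.
Proof.
move=> pL [e ->]; rewrite -expnM pnatX; apply/orP; left.
by rewrite pnatE ?(pcharf_prime pL).
Qed.

Lemma frobD (L : finFieldType) (p q : nat) i (x y : L) :
  p \in [pchar L] -> (exists e, q = (p ^ e)%N) ->
  (x + y) ^+ (q ^ i) = x ^+ (q ^ i) + y ^+ (q ^ i).
Proof. by move=> pL he; rewrite exprDn_pchar // (qnat _ pL he). Qed.

Lemma frobN (L : finFieldType) (p q : nat) i (x : L) :
  p \in [pchar L] -> (exists e, q = (p ^ e)%N) ->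
  (- x) ^+ (q ^ i) = - x ^+ (q ^ i).
Proof. by move=> pL he; rewrite exprNn_pchar // (qnat _ pL he). Qed.

Lemma fq_sub (L : finFieldType) (p q : nat) (x y : L) :
  p \in [pchar L] -> (exists e, q = (p ^ e)%N) ->
  in_Fq q x -> in_Fq q y -> in_Fq q (x - y).
Proof.
move=> pL he /eqP hx /eqP hy; apply/eqP.
have := frobD 1 x (- y) pL he; rewrite expn1 => ->.
by rewrite (frobN 1 y pL he) expn1 hx hy.
Qed.

Lemma fq_pow (L : finFieldType) (q : nat) i (c : L) :
  in_Fq q c -> c ^+ (q ^ i) = c.
Proof.
move=> /eqP hc; elim: i => [|i IH]; first by rewrite expn0 expr1.
by rewrite expnSr exprM IH hc.
Qed.
Lemma fq_card (L : finFieldType) (q m : nat) :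
  (1 < q)%N -> (0 < m)%N -> #|L| = (q ^ m)%N ->
  #|[pred x : L | x ^+ q == x]| = q.
Proof.
move=> q1 m0 cL.
set P : {poly L} := 'X^q - 'X.
have dv : forall j, P %| 'X^(q ^ j.+1) - 'X.
  elim=> [|j IH]; first by rewrite expn1.
  have -> : 'X^(q ^ j.+2) - 'X = (('X^(q ^ j.+1)) ^+ q - 'X ^+ q) + P :> {poly L}.
    by rewrite /P addrA subrK -exprM -expnSr.
  apply: dvdp_add => //; rewrite subrXX; apply: dvdp_mulr.
  exact: IH.
have := dv m.-1; rewrite prednK // -cL finField_genPoly => /dvdp_prod_XsubC [msk eqP].
set s := mask msk (index_enum L) in eqP.
have us : uniq s by apply: mask_uniq; exact: index_enum_uniq.
have szP : size P = q.+1.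
  rewrite /P size_polyDl ?size_polyXn // size_polyN size_polyX ltnS //.
have -> : #|[pred x : L | x ^+ q == x]| = #|[pred x | x \in s]|.
  apply: eq_card => x /=; rewrite -root_prod_XsubC -(eqp_root eqP) /root /P.
  by rewrite !hornerE subr_eq0.
have := eqp_size eqP; rewrite szP size_prod_XsubC => -[->].
by apply/card_uniqP.
Qed.

Lemma qlin_add (L : finFieldType) (p q d : nat) (a : {ffun 'I_d -> L}) x y :
  p \in [pchar L] -> (exists e, q = (p ^ e)%N) ->
  qlin_eval q a (x + y) = qlin_eval q a x + qlin_eval q a y.
Proof.
move=> pL he; rewrite /qlin_eval -big_split; apply: eq_bigr => i _.
by rewrite (frobD _ _ _ pL he) mulrDr.
Qed.

Lemma qlin0 (L : finFieldType) (q d : nat) (a : {ffun 'I_d -> L}) :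
  (0 < q)%N -> qlin_eval q a 0 = 0.
Proof.
move=> q0; rewrite /qlin_eval big1 // => i _.
by rewrite expr0n expn_eq0 (gtn_eqF q0) mulr0.
Qed.

Lemma qlin_scale (L : finFieldType) (q d : nat) (a : {ffun 'I_d -> L}) c x :
  in_Fq q c -> qlin_eval q a (c * x) = c * qlin_eval q a x.
Proof.
move=> hc; rewrite /qlin_eval mulr_sumr; apply: eq_bigr => i _.
by rewrite exprMn (fq_pow i hc) mulrCA.
Qed.

Lemma qlin_sum (L : finFieldType) (p q d : nat) (a : {ffun 'I_d -> L})
    (I : Type) (r : seq I) (F : I -> L) :
  p \in [pchar L] -> (exists e, q = (p ^ e)%N) -> (0 < q)%N ->
  qlin_eval q a (\sum_(i <- r) F i) = \sum_(i <- r) qlin_eval q a (F i).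
Proof.
move=> pL he q0.
apply: (big_morph (qlin_eval q a)); first by move=> x y; exact: qlin_add pL he.
exact: qlin0.
Qed.

Lemma KL (L : finFieldType) (q p e m d : nat) (a : {ffun 'I_d.+1 -> L})
    (h : 'I_d.+1 -> L) :
  prime p -> (0 < e)%N -> q = (p ^ e)%N -> #|L| = (q ^ m)%N -> (0 < m)%N ->
  Fq_lin_indep q h -> (forall i, qlin_eval q a (h i) = 0) -> forall i, a i = 0.
Proof.
move=> pp e0 hq cL m0 hind hroot.
have pL : p \in [pchar L] by apply: (card_finPcharP (n := (e * m)%N)) => //; rewrite cL hq expnM.
have he : exists e, q = (p ^ e)%N by exists e.
have q1 : (1 < q)%N by rewrite hq -(expn0 p) ltn_exp2l // prime_gt1.
have q0 : (0 < q)%N by apply: ltnW.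
case: (boolP [forall i, a i == 0]) => [/forallP H i | ]; first by apply/eqP; exact: H.
rewrite negb_forall => /existsP [i0 nz0].
exfalso.
pose Pa : {poly L} := \sum_(i < d.+1) a i *: 'X^(q ^ i).
have Pnz : Pa != 0.
  apply: contra nz0 => /eqP P0.
  have : Pa`_(q ^ i0) = a i0.
    rewrite coef_sum (bigD1 i0) //= coefZ coefXn eqxx mulr1 big1 ?addr0 //.
    move=> j ne; rewrite coefZ coefXn (inj_eq (expnI q1)).
    by move: ne; rewrite -val_eqE eq_sym => /negbTE ->; rewrite mulr0.
  by rewrite P0 coef0 => <-.
have Psz : (size Pa <= (q ^ d).+1)%N.
  apply: (big_ind (fun P : {poly L} => size P <= (q ^ d).+1)%N).
  - by rewrite size_poly0.
  - by move=> x y hx hy; apply: leq_trans (size_polyD _ _) _; rewrite geq_max hx hy.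
  - move=> i _; apply: leq_trans (size_scale_leq _ _) _.
    by rewrite size_polyXn ltnS leq_exp2l // -ltnS.
have Phorn : forall x, Pa.[x] = qlin_eval q a x.
  move=> x; rewrite horner_sum; apply: eq_bigr => i _.
  by rewrite hornerZ hornerXn.
have cT : #|{: {x : L | in_Fq q x}}| = q by rewrite card_sig (fq_card q1 m0 cL).
pose phi (c : {ffun 'I_d.+1 -> {x : L | in_Fq q x}}) : L := \sum_i val (c i) * h i.
have phi_inj : injective phi.
  move=> c1 c2 E.
  have Z : \sum_i (val (c1 i) - val (c2 i)) * h i = 0.
    by rewrite -[RHS](subrr (phi c1)) {2}E /phi -sumrB; apply: eq_bigr => i _; rewrite mulrBl.
  have := hind _ _ Z => H.
  apply/ffunP => i; apply: val_inj; apply/eqP; rewrite -subr_eq0; apply/eqP; apply: (H _ i) => j.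
  by apply: (fq_sub pL he); apply: valP.
pose rs := map phi (enum {: {ffun 'I_d.+1 -> {x : L | in_Fq q x}}}).
have := @max_poly_roots _ Pa rs Pnz.
have -> : all (root Pa) rs.
  apply/allP => x /mapP [c _ ->]; rewrite /root Phorn /phi (qlin_sum _ _ _ pL he q0).
  rewrite big1 // => i _; rewrite (qlin_scale _ _ (valP (c i))) hroot mulr0 //.
rewrite map_inj_uniq // enum_uniq => /(_ isT isT).
rewrite size_map -cardE card_ffun cT card_ord => H.
have := leq_trans H Psz; by rewrite ltnS leqNgt ltn_exp2l // ltnSn.
Qed.

Lemma sub_indep (L : finFieldType) (q n D : nat) (g : 'I_n -> L) (e : 'I_D -> 'I_n) :
  (0 < q)%N -> injective e -> Fq_lin_indep q g -> Fq_lin_indep q (fun i => g (e i)).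
Proof.
move=> q0 ei hg c hc Z.
pose c' j := \sum_i (if e i == j then c i else 0).
have c'E : forall i, c' (e i) = c i.
  move=> i; rewrite /c' (bigD1 i) //= eqxx big1 ?addr0 // => i' ne.
  by rewrite (inj_eq ei) (negbTE ne).
have sumE : \sum_j c' j * g j = \sum_i c i * g (e i).
  rewrite /c'; under eq_bigr do rewrite mulr_suml.
  rewrite exchange_big /=; apply: eq_bigr => i _.
  rewrite (bigD1 (e i)) //= eqxx big1 ?addr0 // => j ne.
  by rewrite eq_sym (negbTE ne) mul0r.
have hc' : forall j, in_Fq q (c' j).
  move=> j; case: (boolP [exists i, e i == j]) => [/existsP [i /eqP <-] | ].
    by rewrite c'E.
  rewrite negb_exists => /forallP H.
  rewrite /c' big1 => [|i _]; last by rewrite (negbTE (H i)).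
  by rewrite /in_Fq expr0n (gtn_eqF q0).
move=> i; rewrite -c'E; apply: (hg c' hc'); by rewrite sumE.
Qed.

Lemma KL' (L : finFieldType) (q p e m n d : nat) (a : {ffun 'I_d.+1 -> L})
    (g : 'I_n -> L) (A : {pred 'I_n}) :
  prime p -> (0 < e)%N -> q = (p ^ e)%N -> #|L| = (q ^ m)%N -> (0 < m)%N ->
  Fq_lin_indep q g -> (d.+1 <= #|A|)%N ->
  (forall i, i \in A -> qlin_eval q a (g i) = 0) -> forall i, a i = 0.
Proof.
move=> pp e0 hq cL m0 hind hA hroot.
have q0 : (0 < q)%N by rewrite hq expn_gt0 prime_gt0.
pose f (i : 'I_d.+1) : 'I_n := enum_val (widen_ord hA i).
have fi : injective f.
  by move=> i j /enum_val_inj /(congr1 val) /= /val_inj.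
apply: (KL (h := fun i => g (f i)) pp e0 hq cL m0).
  exact: sub_indep q0 fi hind.
by move=> i; apply: hroot; exact: enum_valP.
Qed.

Lemma bigmin_le (I : eqType) (r : seq I) (P : pred I) (F : I -> nat) x0 n0 :
  x0 \in r -> P x0 -> (\big[minn/n0]_(i <- r | P i) F i <= F x0)%N.
Proof.
elim: r => // y r IH; rewrite in_cons big_cons => /orP [/eqP <- | xr] Px.
  by rewrite Px geq_minl.
case: (P y); last exact: IH.
by rewrite geq_min IH ?orbT.
Qed.

Lemma bigmax_ge (I : eqType) (r : seq I) (P : pred I) (F : I -> nat) x0 n0 :
  x0 \in r -> P x0 -> (F x0 <= \big[maxn/n0]_(i <- r | P i) F i)%N.
Proof.
elim: r => // y r IH; rewrite in_cons big_cons => /orP [/eqP <- | xr] Px.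
  by rewrite Px leq_max leqnn.
case: (P y); last exact: IH.
by rewrite leq_max IH ?orbT.
Qed.

Theorem mainTheorem5 (q m n k : nat) (L : finFieldType) (g : 'I_n -> L)
    (f : {ffun 'I_k.+1 -> L}) :
  is_prime_power q -> #|L| = (q ^ m)%N ->
  (1 <= k)%N -> (k < n)%N -> (n <= m)%N ->
  Fq_lin_indep q g ->
  f ord_max != 0 ->
  let C := gabidulin q k g in
  let sigma_f : word L n := [ffun i => qlin_eval q f (g i)] in
  [/\ dist_code sigma_f C = (n - k)%N,
      covering_radius C = (n - k)%N,
      deep_hole C sigma_f
    & ((q ^ m - 1) * q ^ (m * k) <= #|[set u | deep_hole C u]|)%N].
Proof.
move=> [p [e [pp [e0 hq]]]] cL k1; case: k k1 f => // k _ f kn nm hind fnz C sf.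
have m0 : (0 < m)%N by apply: leq_trans nm; apply: leq_trans kn.
have q0 : (0 < q)%N by rewrite hq expn_gt0 prime_gt0.
have kn' : (k.+1 <= n)%N by apply: ltnW.
pose cw (a : {ffun 'I_k.+1 -> L}) : word L n := [ffun i => qlin_eval q a (g i)].
have CE : forall c, (c \in C) = [exists a, c == cw a].
  move=> c; apply/imsetP/existsP => [[a _ ->]|[a /eqP ->]]; exists a => //.
have L1 : forall f0 : {ffun 'I_k.+2 -> L}, f0 ord_max != 0 -> forall c, c \in C ->
    (n - k.+1 <= dH [ffun i => qlin_eval q f0 (g i)] c)%N.
  move=> f0 f0nz c; rewrite CE => /existsP [a /eqP ->].
  pose b : {ffun 'I_k.+2 -> L} :=
    [ffun j => f0 j - (if (j < k.+1)%N then a (inord j) else 0)].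
  have diffE : forall x, qlin_eval q f0 x - qlin_eval q a x = qlin_eval q b x.
    move=> x; rewrite /qlin_eval !(big_ord_recr k.+1) /= ffunE /= ltnn subr0.
    rewrite addrAC; congr (_ + _); rewrite -sumrB; apply: eq_bigr => i _.
    by rewrite ffunE /= ltn_ord inord_val mulrBl.
  set u := [ffun i => _].
  rewrite leqNgt; apply/negP => hlt.
  pose A := [set i | u i == cw a i].
  have hA : #|A| + dH u (cw a) = n.
    rewrite /dH -[RHS]card_ord -(cardsC A); congr (_ + _); apply: eq_card => i.
    by rewrite !inE.
  have hA2 : (k.+2 <= #|A|)%N by move: hA hlt kn; clear; lia.
  have := KL' (a := b) pp e0 hq cL m0 hind hA2.
  have /[swap] /[apply] : forall i, i \in A -> qlin_eval q b (g i) = 0.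
    move=> i; rewrite inE => /eqP E; rewrite -diffE; move: E.
    by rewrite !ffunE => ->; rewrite subrr.
  move=> /(_ ord_max); rewrite ffunE /= ltnn subr0 => /eqP; exact/negP.
have L2 : forall u : word L n, exists2 c, c \in C & (dH u c <= n - k.+1)%N.
  move=> u.
  pose w (i : 'I_k.+1) : 'I_n := widen_ord kn' i.
  have wi : injective w by move=> i j E; apply: val_inj; exact: (congr1 val E).
  pose Phi (a : {ffun 'I_k.+1 -> L}) : {ffun 'I_k.+1 -> L} :=
    [ffun i => qlin_eval q a (g (w i))].
  have Phi_inj : injective Phi.
    move=> a1 a2 E.
    pose b : {ffun 'I_k.+1 -> L} := [ffun j => a1 j - a2 j].
    have bE : forall x, qlin_eval q b x = qlin_eval q a1 x - qlin_eval q a2 x.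
      by move=> x; rewrite /qlin_eval -sumrB; apply: eq_bigr => i _; rewrite ffunE mulrBl.
    have hb := KL (a := b) (h := fun i => g (w i)) pp e0 hq cL m0
      (sub_indep q0 wi hind).
    apply/ffunP => j; apply/eqP; rewrite -subr_eq0; apply/eqP.
    have := hb _ j; rewrite ffunE; apply => i.
    rewrite bE; have := congr1 (fun h : {ffun 'I_k.+1 -> L} => h i) E; rewrite /= !ffunE => ->.
    by rewrite subrr.
  have [Phinv PhiK PhinvK] := injF_bij Phi_inj.
  pose t : {ffun 'I_k.+1 -> L} := [ffun i => u (w i)].
  exists (cw (Phinv t)); first by rewrite CE; apply/existsP; exists (Phinv t).
  pose W := [set w i | i : 'I_k.+1].
  have cW : #|W| = k.+1 by rewrite card_imset // card_ord.
  have sub : [set i | u i != cw (Phinv t) i] \subset ~: W.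
    apply/subsetP => i; rewrite !inE; apply: contra => /imsetP [j _ ->].
    have := congr1 (fun h : {ffun 'I_k.+1 -> L} => h j) (PhinvK t); rewrite /= !ffunE => ->.
    by [].
  apply: leq_trans (subset_leq_card sub) _.
  by move: (cardsC W); rewrite cW card_ord; lia.
have Dlow : forall f0 : {ffun 'I_k.+2 -> L}, f0 ord_max != 0 ->
    (n - k.+1 <= dist_code [ffun i => qlin_eval q f0 (g i)] C)%N.
  move=> f0 f0nz; rewrite /dist_code.
  apply: (big_ind (fun x => n - k.+1 <= x)%N) => //.
  - exact: leq_subr.
  - by move=> x y hx hy; rewrite leq_min hx hy.
  - by move=> c hc; apply: L1.
have Dup : forall u : word L n, (dist_code u C <= n - k.+1)%N.
  move=> u; have [c hc hd] := L2 u; rewrite /dist_code.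
  by apply: leq_trans (bigmin_le _ _ (mem_index_enum c) hc) hd.
have Deq : forall f0 : {ffun 'I_k.+2 -> L}, f0 ord_max != 0 ->
    dist_code [ffun i => qlin_eval q f0 (g i)] C = (n - k.+1)%N.
  by move=> f0 f0nz; apply/anti_leq; rewrite Dup Dlow.
have Cov : covering_radius C = (n - k.+1)%N.
  apply/anti_leq; apply/andP; split.
    by apply/bigmax_leqP => u _; apply: Dup.
  rewrite /covering_radius -(Deq f fnz).
  exact: (bigmax_ge _ _ (mem_index_enum _)).
have DH : forall f0 : {ffun 'I_k.+2 -> L}, f0 ord_max != 0 ->
    deep_hole C [ffun i => qlin_eval q f0 (g i)].
  by move=> f0 f0nz; rewrite /deep_hole Cov Deq.
split; [exact: Deq | exact: Cov | exact: DH |].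
pose ext (pr : {ffun 'I_k.+1 -> L} * {x : L | x != 0}) : {ffun 'I_k.+2 -> L} :=
  [ffun j : 'I_k.+2 => if (j < k.+1)%N then pr.1 (inord j) else val pr.2].
have extmax : forall pr, ext pr ord_max != 0.
  by move=> pr; rewrite ffunE /= ltnn; exact: (valP pr.2).
have ext_inj : injective ext.
  case=> [a1 x1] [a2 x2] E; congr pair.
    apply/ffunP => j; have := congr1 (fun h : {ffun 'I_k.+2 -> L} => h (widen_ord (leqnSn _) j)) E.
    by rewrite !ffunE /= ltn_ord inord_val.
  by apply: val_inj; have := congr1 (fun h : {ffun 'I_k.+2 -> L} => h ord_max) E; rewrite !ffunE /= ltnn.
pose G pr : word L n := [ffun i => qlin_eval q (ext pr) (g i)].
have G_inj : injective G.
  move=> pr1 pr2 E; apply: ext_inj.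
  pose b : {ffun 'I_k.+2 -> L} := [ffun j => ext pr1 j - ext pr2 j].
  have bE : forall x, qlin_eval q b x = qlin_eval q (ext pr1) x - qlin_eval q (ext pr2) x.
    by move=> x; rewrite /qlin_eval -sumrB; apply: eq_bigr => i _; rewrite ffunE mulrBl.
  have hn : (k.+2 <= #|[set: 'I_n]|)%N by rewrite cardsT card_ord.
  have hb := KL' (a := b) pp e0 hq cL m0 hind hn.
  apply/ffunP => j; apply/eqP; rewrite -subr_eq0; apply/eqP.
  have := hb _ j; rewrite ffunE; apply => i _.
  rewrite bE; have := congr1 (fun h : word L n => h i) E; rewrite /= !ffunE => ->.
  by rewrite subrr.
have sub : G @: [set: {ffun 'I_k.+1 -> L} * {x : L | x != 0}] \subset [set u | deep_hole C u].
  apply/subsetP => u /imsetP [pr _ ->]; rewrite inE; exact: DH.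
apply: leq_trans (subset_leq_card sub); rewrite card_imset // cardsT card_prod.
rewrite card_ffun card_ord card_sig cardC1 cL mulnC expnM.
by rewrite subn1.
Qed.
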